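(* Let $k\ge 2$ be an integer. The number $b_0(\mathcal F_k)$ of connected components of the $k$-Farey graph $\mathcal F_k$ is \[ b_0(\mathcal F_k)=\begin{cases} p^{\ell-1}(p+1) & \text{if } k=p^\ell \text{ for a prime } p \text{ and an integer } \ell>0,\\ \infty & \text{otherwise.}\end{cases} \]
   Context: The vertex set $V$ consists of all reduced fractions $p/q$ with $p,q\in\mathbb Z$, $\gcd(p,q)=1$, together with $1/0$; here $p/q$ and $(-p)/(-q)$ denote the same vertex. For vertices define $d(p/q,a/b)=|pb-qa|$ (well defined). The $k$-Farey graph $\mathcal F_k$ has vertex set $V$, with an edge between $p/q$ and $a/b$ exactly when $d(p/q,a/b)=k$. *)

(* Defs.v *)
From HB Require Import structures.
From mathcomp Require Import all_boot all_order all_algebra.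
From mathcomp Require Import boolp classical_sets cardinality.
From Stdlib Require Import Relation_Operators.
Set Implicit Arguments. Unset Strict Implicit. Unset Printing Implicit Defensive.
Import Order.TTheory GRing.Theory Num.Theory.
Local Open Scope ring_scope.
Local Open Scope classical_set_scope.

(* A vertex p/q of the Farey graph is represented by its canonical
   representative (p, q): gcd(p,q) = 1 and either q > 0, or (p,q) = (1,0)
   (the vertex 1/0).  This identifies p/q with (-p)/(-q). *)
Definition canon (x : int * int) : bool :=
  (gcdz x.1 x.2 == 1) && ((0 < x.2) || (x == (1, 0))).

Definition vertex := {x : int * int | canon x}.

Definition fdist (v w : vertex) : int :=
  `| (sval v).1 * (sval w).2 - (sval v).2 * (sval w).1 |.

Definition farey_edge (k : nat) (v w : vertex) : Prop := fdist v w = k%:Z.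

Definition farey_conn (k : nat) : vertex -> vertex -> Prop :=
  clos_refl_trans vertex (farey_edge k).

Definition farey_components (k : nat) : set (set vertex) :=
  [set C | exists v : vertex, C = [set w : vertex | farey_conn k v w]].

(* Main.v *)
Require Import Defs.
From mathcomp Require Import all_boot all_order all_algebra.
From mathcomp Require Import boolp classical_sets cardinality.
From mathcomp Require Import zify ring lra.
From Stdlib Require Import Relation_Operators Classical.
Set Implicit Arguments. Unset Strict Implicit. Unset Printing Implicit Defensive.
Import Order.TTheory GRing.Theory Num.Theory.
Local Open Scope ring_scope.
Local Open Scope classical_set_scope.

Definition det (x y : int * int) : int := x.1 * y.2 - x.2 * y.1.
Definition prim (x : int * int) := gcdz x.1 x.2 = 1.

Lemma fdistE v w : fdist v w = `|det (sval v) (sval w)|.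
Proof. by []. Qed.

Lemma detC x y : det x y = - det y x.
Proof. rewrite /det; ring. Qed.

Lemma canon_prim (v : vertex) : prim (sval v).
Proof. by case: v => x /= /andP[/eqP]. Qed.

Lemma canon_y (v : vertex) : 0 <= (sval v).2 /\ ((sval v).2 = 0 -> sval v = (1, 0)).
Proof.
case: v => [[a b]] /= /andP[_ /orP[H|/eqP H]].
  rewrite /= in H *; split; first lia. move=> E; exfalso; lia.
by case: H => -> ->.
Qed.

Lemma dvdz1' (d : int) : (d %| 1)%Z -> `|d| = 1.
Proof. rewrite dvdz1 => /eqP H. by rewrite -abszE H. Qed.

Lemma prim_dvd x d : prim x -> (d %| x.1)%Z -> (d %| x.2)%Z -> `|d| = 1.
Proof.
rewrite /prim => H h1 h2; apply: dvdz1'.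
have : (d %| gcdz x.1 x.2)%Z by rewrite dvdz_gcd h1 h2.
by rewrite H.
Qed.

Lemma dvd_det x y d : (d %| x.1)%Z -> (d %| x.2)%Z -> (d %| det x y)%Z.
Proof. move=> h1 h2; rewrite /det; apply: rpredB; exact: dvdz_mulr. Qed.

Lemma prim_bez x : prim x -> exists r, det x r = 1.
Proof.
rewrite /prim => H. case: (Bezoutz x.1 x.2) => u [v E].
exists (- v, u); rewrite /det /=. rewrite -H -E. ring.
Qed.

Lemma bez_prim x r : det x r = 1 -> prim x.
Proof.
move=> E; rewrite /prim.
have h : (gcdz x.1 x.2 %| det x r)%Z by apply: dvd_det; [exact: dvdz_gcdl| exact: dvdz_gcdr].
rewrite E in h.
by have := dvdz1' h; move=> <-.
Qed.

Lemma decomp x r u : det x r = 1 ->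
  u.1 = det u r * x.1 + det x u * r.1 /\ u.2 = det u r * x.2 + det x u * r.2.
Proof.
move=> E; split.
  have : u.1 * det x r = det u r * x.1 + det x u * r.1 by rewrite /det; ring.
  by rewrite E mulr1.
have : u.2 * det x r = det u r * x.2 + det x u * r.2 by rewrite /det; ring.
by rewrite E mulr1.
Qed.

Lemma det0_eq (v w : vertex) : det (sval v) (sval w) = 0 -> v = w.
Proof.
move=> D.
have [r Hr] := prim_bez (canon_prim v).
have [E1 E2] := decomp (sval w) Hr.
rewrite D in E1 E2. rewrite !mul0r !addr0 in E1 E2.
set c := det (sval w) r in E1 E2.
have hc : `|c| = 1.
  apply: (prim_dvd (canon_prim w)); [rewrite E1|rewrite E2]; apply: dvdz_mulr; exact: dvdzz.
have [cv1 cv2] := canon_y v. have [cw1 cw2] := canon_y w.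
have : c = 1 \/ c = -1 by lia.
case=> Hc.
  apply: val_inj. rewrite /= [sval w]surjective_pairing E1 E2 Hc !mul1r.
  by case: (sval v).
exfalso. rewrite Hc in E1 E2.
have h0 : (sval v).2 = 0 by lia.
have := cv2 h0. have := cw2 ltac:(lia). move=> H1 H2. rewrite H1 H2 /= in E1. lia.
Qed.

Definition nrm (x : int * int) : int * int :=
  if 0 < x.2 then x else if x.2 < 0 then (- x.1, - x.2) else (1, 0).

Lemma nrm_sign x : prim x -> exists2 e : int, (e = 1 \/ e = -1) & nrm x = (e * x.1, e * x.2).
Proof.
move=> P; rewrite /nrm; case: ltgtP => h.
- exists 1; [by left| by rewrite !mul1r; case: x {P h}].
- exists (-1); [by right| by rewrite !mulN1r].
have h1 : `|x.1| = 1.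
  apply: (prim_dvd P); first exact: dvdzz.
  by rewrite -h dvdz0.
have [E|E] : x.1 = 1 \/ x.1 = -1 by lia.
  exists 1; [by left|]. by rewrite E -h !mul1r.
exists (-1); [by right|]. by rewrite E -h mulN1r opprK mulr0.
Qed.

Lemma sgn_det_l x y e : (e = 1 \/ e = -1) -> `|det (e * x.1, e * x.2) y| = `|det x y|.
Proof. by case=> ->; rewrite /det /=; [rewrite !mul1r | rewrite -normrN; congr `|_|; ring]. Qed.

Lemma sgn_det_r x y e : (e = 1 \/ e = -1) -> `|det y (e * x.1, e * x.2)| = `|det y x|.
Proof. by case=> ->; rewrite /det /=; [rewrite !mul1r | rewrite -normrN; congr `|_|; ring]. Qed.

Lemma prim_sgn x e : (e = 1 \/ e = -1) -> prim x -> prim (e * x.1, e * x.2).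
Proof.
move=> He /prim_bez [r Hr]; apply: (@bez_prim _ (e * r.1, e * r.2)).
rewrite /det /=. have -> : e * x.1 * (e * r.2) - e * x.2 * (e * r.1) = (e * e) * det x r by rewrite /det; ring.
by rewrite Hr; case: He => ->.
Qed.

Lemma nrm_canon x : prim x -> Defs.canon (nrm x).
Proof.
move=> P; rewrite /Defs.canon; apply/andP; split.
  by apply/eqP; have [e He ->] := nrm_sign P; exact: prim_sgn.
rewrite /nrm; case: (ltgtP 0 x.2) => h /=.
- by rewrite h.
- by rewrite oppr_gt0 h.
- exact: eqxx.
Qed.

Lemma canon10 : Defs.canon (1, 0).
Proof. rewrite /Defs.canon /=. exact: eqxx. Qed.

Definition vinf : vertex := exist _ (1, 0) canon10.

Definition mkv (x : int * int) : vertex := insubd vinf (nrm x).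

Lemma mkvE x : prim x -> sval (mkv x) = nrm x.
Proof. move=> P; by rewrite /mkv val_insubd nrm_canon. Qed.

Lemma det_mkv_l x y : prim x -> `|det (sval (mkv x)) y| = `|det x y|.
Proof. move=> P; rewrite mkvE //; have [e He ->] := nrm_sign P; exact: sgn_det_l. Qed.

Lemma det_mkv_r x y : prim x -> `|det y (sval (mkv x))| = `|det y x|.
Proof. move=> P; rewrite mkvE //; have [e He ->] := nrm_sign P; exact: sgn_det_r. Qed.

Lemma edge_sym k v w : farey_edge k v w -> farey_edge k w v.
Proof. by rewrite /farey_edge !fdistE detC normrN. Qed.

Lemma conn_sym k v w : farey_conn k v w -> farey_conn k w v.
Proof.
elim=> [x y /edge_sym H| x| x y z _ H1 _ H2]; first exact: rt_step.
  exact: rt_refl.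
exact: rt_trans H2 H1.
Qed.

Definition Rk (k : nat) (x y : int * int) := (k%:Z %| det x y)%Z.

Lemma Rk_abs k x y y' : `|det x y| = `|det x y'| -> Rk k x y = Rk k x y'.
Proof. move=> E; rewrite /Rk !dvdzE; have -> : `|det x y|%N = `|det x y'|%N by lia. by []. Qed.

Lemma Rk_trans k x y z : prim y -> Rk k x y -> Rk k y z -> Rk k x z.
Proof.
move=> /prim_bez [r Hr]; rewrite /Rk => HX HY.
have -> : det x z = r.2 * (x.1 * det y z + z.1 * det x y) - r.1 * (z.2 * det x y + x.2 * det y z).
  have <- : det x z * det y r = det x z by rewrite Hr mulr1.
  rewrite /det; ring.
apply: rpredB; apply: dvdz_mull; apply: rpredD; exact: dvdz_mull.
Qed.

Lemma Rk_refl k x : Rk k x x.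
Proof. by rewrite /Rk /det mulrC subrr dvdz0. Qed.

Lemma Rk_sym k x y : Rk k x y -> Rk k y x.
Proof. by rewrite /Rk detC rpredN. Qed.

Lemma edge_R k v w : farey_edge k v w -> Rk k (sval v) (sval w).
Proof.
rewrite /farey_edge fdistE /Rk => E.
have [->|->] : det (sval v) (sval w) = k%:Z \/ det (sval v) (sval w) = - k%:Z by lia.
  exact: dvdzz.
by rewrite rpredN dvdzz.
Qed.

Lemma conn_R k v w : farey_conn k v w -> Rk k (sval v) (sval w).
Proof.
elim=> [x y /edge_R //| x| x y z _ H1 _ H2]; first exact: Rk_refl.
exact: Rk_trans (canon_prim y) H1 H2.
Qed.

Lemma prim_of_dvd x a b :
  (forall d, (d %| x.1)%Z -> (d %| x.2)%Z -> (d %| a)%Z && (d %| b)%Z) ->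
  coprimez a b -> prim x.
Proof.
move=> H /eqP Hc; rewrite /prim.
have /andP [ha hb] := H _ (dvdz_gcdl x.1 x.2) (dvdz_gcdr x.1 x.2).
have : (gcdz x.1 x.2 %| gcdz a b)%Z by rewrite dvdz_gcd ha hb.
rewrite Hc => /dvdz1'. by move=> <-.
Qed.

Lemma coprime_pow p l t : prime p -> (0 < l)%N -> ~~ (p%:Z %| t)%Z ->
  coprimez (p ^ l)%N%:Z t.
Proof.
move=> pp l0 h; rewrite coprimezE /= coprime_pexpl // prime_coprime //.
Qed.

Lemma pow_gt1 p l : prime p -> (0 < l)%N -> (1 < p ^ l)%N.
Proof.
move=> pp l0; apply: (@leq_trans p); first exact: prime_gt1.
by rewrite -{1}(expn1 p) leq_pexp2l // prime_gt0.
Qed.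

Lemma pick_t (p : nat) (m a : int) : prime p -> m != 0 -> ~~ (m %| a)%Z ->
  exists t : int, ~~ (p%:Z %| t)%Z /\ `|t * m + a| < `|m|.
Proof.
move=> pp m0 nma.
have E := divz_eq a m. have e0 := modz_ge0 a m0. have e1 := ltz_mod a m0.
have e2 : (a %% m)%Z != 0 by apply/negP => /eqP /dvdz_mod0P; apply/negP.
set q0 := (a %/ m)%Z in E. set e := (a %% m)%Z in E e0 e1 e2. clearbody q0 e.
case hq: (p%:Z %| - q0)%Z.
  exists (- q0 - (if 0 < m then 1 else -1)); split.
    apply/negP => ht.
    have h1 : (p%:Z %| (if 0 < m then 1 else -1))%Z.
      have -> : (if 0 < m then 1 else -1) = - q0 - (- q0 - (if 0 < m then 1 else -1)) by ring.
      exact: rpredB.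
    have : (p%:Z %| 1)%Z by case: ifP h1 => _ //; rewrite rpredN.
    rewrite dvdz1 /= => /eqP p1. by move: (prime_gt1 pp); rewrite p1.
  case: ifP => hm.
    have -> : (- q0 - 1) * m + a = e - m by rewrite E; ring.
    have hm' : 0 < m by rewrite hm.
    lia.
  have -> : (- q0 - -1) * m + a = e + m by rewrite E; ring.
  have hm' : m <= 0 by rewrite leNgt hm.
  lia.
exists (- q0); split; first by rewrite hq.
have -> : - q0 * m + a = e by rewrite E; ring.
lia.
Qed.

Lemma descent p l (v : vertex) : prime p -> (0 < l)%N ->
  forall n (w : vertex), (`|det (sval v) (sval w)|%N <= n)%N ->
  Rk (p ^ l) (sval v) (sval w) -> farey_conn (p ^ l) v w.
Proof.
move=> pp l0; have k1 := pow_gt1 pp l0; set k := (p ^ l)%N in k1 *.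
elim=> [|n IH] w Hn HR.
  have -> : w = v by apply/esym/det0_eq; lia.
  exact: rt_refl.
case: (det (sval v) (sval w) =P 0) => [D0|D0].
  have -> : w = v by apply/esym/det0_eq.
  exact: rt_refl.
move/dvdzP: HR => [m Dm].
case: (`|m| =P 1) => [m1|m1].
  apply: rt_step; rewrite /farey_edge fdistE Dm normrM m1 mul1r.
  by [].
have m0 : m != 0 by apply/eqP => m0; apply: D0; rewrite Dm m0 mul0r.
have [r Hr] := prim_bez (canon_prim w).
set a := det (sval v) r.
have nma : ~~ (m %| a)%Z.
  apply/negP => hma; apply: m1.
  have [E1 E2] := decomp (sval v) Hr.
  have hD : det (sval w) (sval v) = - (m * k%:Z) by rewrite detC Dm.
  rewrite -/a hD in E1 E2.
  apply: (prim_dvd (canon_prim v)); [rewrite E1|rewrite E2]; apply: rpredD;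
    [exact: dvdz_mulr| by rewrite mulNr rpredN -mulrA; apply: dvdz_mulr; exact: dvdzz
    |exact: dvdz_mulr| by rewrite mulNr rpredN -mulrA; apply: dvdz_mulr; exact: dvdzz].
have [t [pt ht]] := pick_t pp m0 nma.
set u := (t * (sval w).1 + k%:Z * r.1, t * (sval w).2 + k%:Z * r.2).
have Hwu : det u (sval w) = - k%:Z.
  have <- : det (sval w) r * (- k%:Z) = - k%:Z by rewrite Hr mul1r.
  rewrite /u /det /=; ring.
have Hur : det u r = t.
  have <- : det (sval w) r * t = t by rewrite Hr mul1r.
  rewrite /u /det /=; ring.
have Hvu : det (sval v) u = k%:Z * (t * m + a).
  have -> : det (sval v) u = t * det (sval v) (sval w) + k%:Z * a by rewrite /u /a /det /=; ring.
  rewrite Dm; ring.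
have Pu : prim u.
  apply: (@prim_of_dvd _ (k%:Z) t); last exact: coprime_pow.
  move=> d h1 h2; apply/andP; split.
    by rewrite -[k%:Z]opprK -Hwu rpredN; apply: dvd_det.
  by rewrite -Hur; apply: dvd_det.
have Huw : farey_edge k (mkv u) w.
  by rewrite /farey_edge fdistE det_mkv_l // Hwu normrN.
apply: rt_trans (rt_step _ _ _ _ Huw).
apply: IH.
  have h1 := det_mkv_r (sval v) Pu. rewrite Hvu normrM in h1.
  have h2 : `|det (sval v) (sval w)| = `|m| * k%:Z by rewrite Dm normrM.
  have h3 : 0 < k%:Z by lia.
  have h4 : `|det (sval v) (sval (mkv u))| < `|det (sval v) (sval w)|.
    move: ht h1 h2 h3.
    move: `|t * m + a| `|m| `|det (sval v) (sval w)| `|det (sval v) (sval (mkv u))|.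
    move=> X M A B. nia.
  move: h4 Hn. lia.
rewrite (Rk_abs _ (det_mkv_r _ Pu)) /Rk Hvu.
exact: dvdz_mulr (dvdzz _).
Qed.

Definition rep (p l i : nat) : int * int :=
  if (i < p ^ l)%N then (i%:Z, 1) else (1, p%:Z * (i - p ^ l)%N%:Z).

Lemma dvdzP' (d m : int) : (d %| m)%Z -> exists c : int, m = c * d.
Proof. by move/dvdzP. Qed.

Lemma rep_prim p l i : prim (rep p l i).
Proof.
rewrite /rep; case: ifP => _.
  by apply: (@bez_prim _ (-1, 0)); rewrite /det /=; ring.
by apply: (@bez_prim _ (0, 1)); rewrite /det /=; ring.
Qed.

Lemma powS_split p l : (0 < l)%N -> (p ^ l = p * p ^ l.-1)%N.
Proof. by case: l => // l _; rewrite expnS. Qed.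

Lemma rep_inj p l i j : prime p -> (0 < l)%N ->
  (i < p ^ l.-1 * p.+1)%N -> (j < p ^ l.-1 * p.+1)%N ->
  Rk (p ^ l) (rep p l i) (rep p l j) -> i = j.
Proof.
move=> pp l0; have p1 := prime_gt1 pp.
have E := powS_split p l0. set P := (p ^ l.-1)%N in E *.
have P0 : (0 < P)%N by rewrite expn_gt0 prime_gt0.
rewrite /Rk E /rep E.
have key : forall i j, (i < p * P)%N -> (p * P <= j)%N -> ~~ ((p * P)%N%:Z %| det (i%:Z, 1) (1, p%:Z * (j - p * P)%N%:Z))%Z.
  move=> i' j' hi hj; apply/negP => /dvdzP' [c Hc].
  move: Hc; rewrite /det /=. move: (j' - p * P)%N => y Hc.
  have : 1 = p%:Z * (i'%:Z * y%:Z - c * P%:Z) by nia.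
  move: (_ - _) => z h.
  have p2 : 2 <= p%:Z by lia.
  case: (lerP z 0) => hz; nia.
move=> hi hj; case: (ltnP i (p * P)) => h1; case: (ltnP j (p * P)) => h2.
- move/dvdzP' => [c Hc]; move: Hc; rewrite /det /= !mulr1.
  move: h1 h2; move: (p * P)%N => K h1 h2 Hc.
  case: (ltrgtP c 0) => hc; nia.
- by move=> h; exfalso; move/negP: (key i j h1 h2).
- by rewrite detC rpredN => h; exfalso; move/negP: (key j i h2 h1).
- move/dvdzP' => [c Hc]; move: Hc; rewrite /det /= !mul1r !mulr1.
  move=> Hc.
  have h0 : p%:Z * ((j - p * P)%N%:Z - (i - p * P)%N%:Z - c * P%:Z) = 0.
    rewrite !mulrBr Hc; rewrite PoszM; ring.
  move/eqP: h0; rewrite mulf_eq0 => /orP [/eqP hp|/eqP h0]; first by lia.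
  have hc : c = 0.
    move: hi hj h0; rewrite mulnS => hi hj h0.
    case: (ltrgtP c 0) => hc //; nia.
  rewrite hc mul0r subr0 in h0. lia.
Qed.

Lemma rep_surj p l x : prime p -> (0 < l)%N -> prim x ->
  exists2 i, (i < p ^ l.-1 * p.+1)%N & Rk (p ^ l) x (rep p l i).
Proof.
move=> pp l0 Px; have p1 := prime_gt1 pp.
have E := powS_split p l0. set P := (p ^ l.-1)%N in E *.
have P0 : (0 < P)%N by rewrite expn_gt0 prime_gt0.
case hx2: (p%:Z %| x.2)%Z.
- have hx1 : ~~ (p%:Z %| x.1)%Z.
    apply/negP => h1; have := prim_dvd Px h1 hx2; lia.
  have /eqP cop := coprime_pow pp l0 hx1.
  have [v [u Huv]] := Bezoutz (p ^ l)%N%:Z x.1. rewrite cop in Huv.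
  have k0 : (p ^ l)%N%:Z != 0 by rewrite E; lia.
  have Ey := divz_eq (x.2 * u) (p ^ l)%N%:Z.
  have y0 := modz_ge0 (x.2 * u) k0. have y1 := ltz_mod (x.2 * u) k0.
  move: Ey y0 y1; set q := (_ %/ _)%Z; set y := (_ %% _)%Z; clearbody q y => Ey y0 y1.
  have py : (p%:Z %| y)%Z.
    have -> : y = x.2 * u - q * (p ^ l)%N%:Z by rewrite Ey; ring.
    apply: rpredB; first exact: dvdz_mulr.
    by apply: dvdz_mull; rewrite E PoszM; apply: dvdz_mulr; exact: dvdzz.
  have [j Hj] := dvdzP' py.
  have j0 : 0 <= j by nia.
  have j1 : j < P%:Z by rewrite E in y1; nia.
  exists (p * P + `|j|)%N.
    rewrite mulnS; lia.
  have -> : rep p l (p * P + `|j|)%N = (1, p%:Z * j).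
    rewrite /rep E ifF; last by lia.
    congr (_, _); congr (_ * _); lia.
  apply/dvdzP; exists (- x.2 * v - x.1 * q).
  rewrite /det /=.
  have -> : p%:Z * j = x.2 * u - q * (p ^ l)%N%:Z by rewrite mulrC -Hj Ey; ring.
  apply/eqP; rewrite -subr_eq0; apply/eqP.
  transitivity (x.2 * (v * (p ^ l)%N%:Z + u * x.1 - 1)); first ring.
  by rewrite Huv subrr mulr0.
- have hx2' : ~~ (p%:Z %| x.2)%Z by rewrite hx2.
  have /eqP cop := coprime_pow pp l0 hx2'.
  have [v [u Huv]] := Bezoutz (p ^ l)%N%:Z x.2. rewrite cop in Huv.
  have k0 : (p ^ l)%N%:Z != 0 by rewrite E; lia.
  have Ey := divz_eq (x.1 * u) (p ^ l)%N%:Z.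
  have y0 := modz_ge0 (x.1 * u) k0. have y1 := ltz_mod (x.1 * u) k0.
  move: Ey y0 y1; set q := (_ %/ _)%Z; set y := (_ %% _)%Z; clearbody q y => Ey y0 y1.
  exists `|y|%N.
    rewrite E in y1; rewrite mulnS; lia.
  have -> : rep p l `|y|%N = (y, 1).
    rewrite /rep ifT; last by lia.
    congr (_, _); lia.
  apply/dvdzP; exists (x.1 * v + x.2 * q).
  rewrite /det /=.
  have -> : y = x.1 * u - q * (p ^ l)%N%:Z by rewrite Ey; ring.
  apply/eqP; rewrite -subr_eq0; apply/eqP.
  transitivity (- x.1 * (v * (p ^ l)%N%:Z + u * x.2 - 1)); first ring.
  by rewrite Huv subrr mulr0.
Qed.

Lemma prime_power_part p l : prime p -> (0 < l)%N ->
  (farey_components (p ^ l) #= `I_(p ^ l.-1 * p.+1))%card.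
Proof.
move=> pp l0.
pose f := fun i => [set w : vertex | farey_conn (p ^ l) (mkv (rep p l i)) w].
have Hrk : forall i (v : vertex), Rk (p ^ l) (sval v) (rep p l i) ->
    farey_conn (p ^ l) v (mkv (rep p l i)).
  move=> i v h; apply: (descent pp l0 (leqnn _)).
  by rewrite (Rk_abs _ (det_mkv_r _ (rep_prim p l i))).
have -> : farey_components (p ^ l) = f @` `I_(p ^ l.-1 * p.+1).
  apply/seteqP; split.
  - move=> C [v ->]. have [i hi hR] := rep_surj pp l0 (canon_prim v).
    exists i => //. rewrite /f; apply/seteqP; split => w /= h.
      exact: rt_trans (Hrk _ _ hR) h.
    exact: rt_trans (conn_sym (Hrk _ _ hR)) h.
  - move=> C [i hi <-]. by exists (mkv (rep p l i)).
apply: inj_card_eq => i j hi hj E.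
have : farey_conn (p ^ l) (mkv (rep p l i)) (mkv (rep p l j)).
  have : f j (mkv (rep p l j)) by exact: rt_refl.
  by rewrite -E.
move/conn_R. rewrite (Rk_abs _ (det_mkv_r _ (rep_prim p l j))) => /Rk_sym.
rewrite (Rk_abs _ (det_mkv_r _ (rep_prim p l i))) => h.
apply: (rep_inj pp l0 (set_mem hi) (set_mem hj)). exact: Rk_sym h.
Qed.

Section MinTheory.
Variable k : nat.
Hypothesis k0 : (0 < k)%N.

Definition cls (w : vertex) := (k%:Z %| (sval w).2)%Z.
Definition desc (w u : vertex) := farey_edge k w u /\ ((sval u).2 : int) < ((sval w).2 : int).
Definition locmin (w : vertex) := forall u, farey_edge k w u -> ((sval w).2 : int) <= ((sval u).2 : int).
Inductive reach : vertex -> vertex -> Prop :=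
| rr w : reach w w
| rs w u z : desc w u -> reach u z -> reach w z.

Lemma cls_R w : cls w = Rk k (1, 0) (sval w).
Proof. by rewrite /cls /Rk /det /= mul1r mul0r subr0. Qed.

Lemma cls_edge w u : cls w -> farey_edge k w u -> cls u.
Proof.
rewrite !cls_R => h e; apply: Rk_trans (canon_prim w) h (edge_R e).
Qed.

Lemma edge_abs w u : farey_edge k w u ->
  det (sval w) (sval u) = k%:Z \/ det (sval w) (sval u) = - k%:Z.
Proof. rewrite /farey_edge fdistE => E; lia. Qed.

Lemma two_desc w u1 u2 : desc w u1 -> desc w u2 -> u1 = u2 \/ farey_edge k u1 u2.
Proof.
move=> [e1 l1] [e2 l2].
have [r Hr] := prim_bez (canon_prim w).
have [_ E1] := decomp (sval u1) Hr.
have [_ E2] := decomp (sval u2) Hr.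
have P : det (sval u1) (sval u2) = det (sval u1) r * det (sval w) (sval u2) - det (sval w) (sval u1) * det (sval u2) r.
  have <- : det (sval u1) (sval u2) * det (sval w) r = det (sval u1) (sval u2) by rewrite Hr mulr1.
  rewrite /det; ring.
have [g1 _] := canon_y u1. have [g2 _] := canon_y u2.
move: E1 E2 P l1 l2 g1 g2.
move: (det (sval u1) r) (det (sval u2) r) (sval w).2 (sval u1).2 (sval u2).2 r.2 => a1 a2 W y1 y2 s.
have [b1|b1] := edge_abs e1; have [b2|b2] := edge_abs e2; rewrite b1 b2 => E1 E2 P l1 l2 g1 g2.
- left; apply: det0_eq; rewrite P.
  have : (a1 - a2) * W = y1 - y2 by rewrite E1 E2; ring.
  move=> h; have : a1 = a2 by case: (ltrgtP a1 a2) => hc //; nia.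
  by move=> ->; ring.
- have : (a1 + a2) * W = y1 + y2 by rewrite E1 E2; ring.
  move=> h; have [ha|ha] : a1 + a2 = 0 \/ a1 + a2 = 1.
    case: (ltrgtP (a1 + a2) 0) => hc; [nia| |by left].
    case: (ltrgtP (a1 + a2) 1) => hd; [nia| nia| by right].
  + left; apply: det0_eq; rewrite P.
    have -> : a1 * - k%:Z - k%:Z * a2 = - k%:Z * (a1 + a2) by ring.
    by rewrite ha mulr0.
  + right; rewrite /farey_edge fdistE P.
    have -> : a1 * - k%:Z - k%:Z * a2 = - k%:Z * (a1 + a2) by ring.
    by rewrite ha mulr1 normrN.
- have : (a1 + a2) * W = y1 + y2 by rewrite E1 E2; ring.
  move=> h; have [ha|ha] : a1 + a2 = 0 \/ a1 + a2 = 1.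
    case: (ltrgtP (a1 + a2) 0) => hc; [nia| |by left].
    case: (ltrgtP (a1 + a2) 1) => hd; [nia| nia| by right].
  + left; apply: det0_eq; rewrite P.
    have -> : a1 * k%:Z - - k%:Z * a2 = k%:Z * (a1 + a2) by ring.
    by rewrite ha mulr0.
  + right; rewrite /farey_edge fdistE P.
    have -> : a1 * k%:Z - - k%:Z * a2 = k%:Z * (a1 + a2) by ring.
    by rewrite ha mulr1.
- left; apply: det0_eq; rewrite P.
  have : (a1 - a2) * W = y1 - y2 by rewrite E1 E2; ring.
  move=> h; have : a1 = a2 by case: (ltrgtP a1 a2) => hc //; nia.
  by move=> ->; ring.
Qed.

Lemma eq_meas w u : farey_edge k w u -> cls w -> (sval w).2 = (sval u).2 -> (sval w).2 = k%:Z.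
Proof.
move=> e; rewrite /cls => /dvdzP' [c Hc] E.
have [g _] := canon_y w.
have := edge_abs e; rewrite /det -E Hc.
have -> : (sval w).1 * (c * k%:Z) - c * k%:Z * (sval u).1 = k%:Z * (c * ((sval w).1 - (sval u).1)) by ring.
move: ((sval w).1 - (sval u).1) => d h.
have hk : 0 < k%:Z by lia.
have h' : c * d = 1 \/ c * d = -1.
  case: h => h; [left|right]; apply: (mulfI (x:=k%:Z)); [lia| rewrite h; ring| lia| rewrite h; ring].
have hc : 0 <= c by nia.
have : c = 1 by case: h' => h'; case: (ltrgtP d 0) => hd; nia.
by move=> ->; rewrite mul1r.
Qed.

Lemma edge_vinf u : (sval u).2 = k%:Z -> desc u vinf.
Proof.
move=> h; split; last by rewrite /= h; lia.
by rewrite /farey_edge fdistE /det /= h mulr0 mulr1 sub0r normrN.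
Qed.

Lemma locmin_vinf : locmin vinf.
Proof. move=> u _ /=; by have [] := canon_y u. Qed.

Lemma reach_inv w z : reach w z -> z = w \/ exists u, desc w u /\ reach u z.
Proof. by case=> [x|x u z' D R]; [left|right; exists u]. Qed.

Lemma uniq_min n : forall w, ((sval w).2 : int) < n%:Z -> cls w ->
  forall z1 z2, reach w z1 -> locmin z1 -> reach w z2 -> locmin z2 -> z1 = z2.
Proof.
elim: n => [|n IH] w hn hc z1 z2 R1 L1 R2 L2.
  by have [g _] := canon_y w; exfalso; lia.
have IH' : forall x, ((sval x).2 : int) < ((sval w).2 : int) -> cls x ->
    forall z1 z2, reach x z1 -> locmin z1 -> reach x z2 -> locmin z2 -> z1 = z2.
  move=> x hx; apply: IH; lia.
have [E1|[u1 [D1 {}R1]]] := reach_inv R1.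
  subst z1. have [E2|[u2 [[e2 l2] _]]] := reach_inv R2; first by [].
  by have := L1 _ e2; lia.
have [E2|[u2 [D2 {}R2]]] := reach_inv R2.
  by subst z2; case: D1 => e1 l1; have := L2 _ e1; lia.
have hc1 : cls u1 by case: D1 => e1 _; exact: cls_edge hc e1.
have hc2 : cls u2 by case: D2 => e2 _; exact: cls_edge hc e2.
have [E|e12] := two_desc D1 D2.
  subst u2; exact: (IH' u1 D1.2 hc1 _ _ R1 L1 R2 L2).
case: (ltrgtP (sval u1).2 (sval u2).2) => h12.
- have D21 : desc u2 u1 by split => //; exact: edge_sym.
  exact: (IH' u2 D2.2 hc2 _ _ (rs D21 R1) L1 R2 L2).
- have D12 : desc u1 u2 by split.
  exact: (IH' u1 D1.2 hc1 _ _ R1 L1 (rs D12 R2) L2).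
- have h1 := eq_meas e12 hc1 h12.
  have h2 : (sval u2).2 = k%:Z by rewrite -h12.
  have a1 := IH' u1 D1.2 hc1 _ _ R1 L1 (rs (edge_vinf h1) (rr _)) locmin_vinf.
  have a2 := IH' u2 D2.2 hc2 _ _ R2 L2 (rs (edge_vinf h2) (rr _)) locmin_vinf.
  by rewrite a1 a2.
Qed.

Lemma uniq_min' w z1 z2 : cls w -> reach w z1 -> locmin z1 -> reach w z2 -> locmin z2 -> z1 = z2.
Proof. move=> hc; apply: (@uniq_min `|(sval w).2|.+1 w _ hc); lia. Qed.

Lemma ex_min n : forall w, ((sval w).2 : int) < n%:Z -> exists z, reach w z /\ locmin z.
Proof.
elim: n => [|n IH] w hn.
  by have [g _] := canon_y w; exfalso; lia.
case: (pselect (locmin w)) => hl.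
  by exists w; split => //; exact: rr.
have [u [eu lu]] : exists u, farey_edge k w u /\ ((sval u).2 : int) < ((sval w).2 : int).
  apply: NNPP => H; apply: hl => u eu.
  case: (lerP (sval w).2 (sval u).2) => // hlt; exfalso; apply: H; by exists u; split.
have [z [Rz Lz]] := IH u ltac:(lia).
by exists z; split => //; exact: (rs (conj eu lu) Rz).
Qed.

Lemma min_edge w w' z : cls w -> farey_edge k w w' -> reach w z -> locmin z -> reach w' z.
Proof.
move=> hc e R L.
case: (ltrgtP (sval w).2 (sval w').2) => h.
- by apply: (rs _ R); split => //; exact: edge_sym.
- have [z' [R' L']] := @ex_min `|(sval w').2|.+1 w' ltac:(lia).
  have -> : z = z' by apply: (uniq_min' hc R L (rs (conj e h) R') L').
  exact: R'.
- have h1 := eq_meas e hc h.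
  have h2 : (sval w').2 = k%:Z by rewrite -h.
  have -> : z = vinf by apply: (uniq_min' hc R L (rs (edge_vinf h1) (rr _)) locmin_vinf).
  exact: rs (edge_vinf h2) (rr _).
Qed.

Lemma min_conn v w : farey_conn k v w -> forall z, cls v -> reach v z -> locmin z -> cls w /\ reach w z.
Proof.
elim=> [x y e| x| x y u _ H1 _ H2] z hc R L.
- split; [exact: cls_edge hc e| exact: min_edge hc e R L].
- by [].
- have [hy Ry] := H1 z hc R L. exact: H2 z hy Ry L.
Qed.

Lemma distinct_min z1 z2 : cls z1 -> locmin z1 -> locmin z2 -> farey_conn k z1 z2 -> z1 = z2.
Proof.
move=> hc L1 L2 C.
have [hc2 R] := min_conn C hc (rr _) L1.
exact: uniq_min' hc2 R L1 (rr _) L2.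
Qed.

End MinTheory.

Definition fam (k : nat) (c : int) (J : nat) : int * int :=
  (- (1 + (c + 1) * (k%:Z * J%:Z)), k%:Z * (k%:Z * J%:Z)).
Definition famr (k : nat) (c : int) (J : nat) : int * int :=
  (- ((c + 1) ^+ 2 * J%:Z), (c + 1) * (k%:Z * J%:Z) - 1).

Lemma fam_det k c J : det (fam k c J) (famr k c J) = 1.
Proof. rewrite /det /=; ring. Qed.

Lemma nrm_pos x : 0 < x.2 -> nrm x = x.
Proof. by move=> h; rewrite /nrm h. Qed.

Lemma fam_val k c J : (0 < k)%N -> (0 < J)%N -> sval (mkv (fam k c J)) = fam k c J.
Proof.
move=> k0 J0; rewrite mkvE; last exact: bez_prim (fam_det k c J).
apply: nrm_pos; rewrite /fam /=; nia.
Qed.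

Lemma not_dvd_alpha (d k : nat) (u : int * int) (a1 a2 b1 b2 al be : int) :
  prime d -> (d %| k)%N -> (be = k%:Z \/ be = - k%:Z) ->
  u.1 = al * a1 + be * b1 -> u.2 = al * a2 + be * b2 -> prim u -> ~~ (d%:Z %| al)%Z.
Proof.
move=> pd dk hbe E1 E2 Pu; apply/negP => hal.
have dbe : (d%:Z %| be)%Z by case: hbe => ->; rewrite ?rpredN; exact: dk.
have := prim_dvd Pu.
rewrite E1 E2 => /(_ d%:Z).
have h1 : (d%:Z %| al * a1 + be * b1)%Z by apply: rpredD; [apply: dvdz_mulr | apply: dvdz_mulr].
have h2 : (d%:Z %| al * a2 + be * b2)%Z by apply: rpredD; [apply: dvdz_mulr | apply: dvdz_mulr].
move=> /(_ h1 h2) h. have := prime_gt1 pd. lia.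
Qed.

Lemma fam_arith (K m y al c s : int) : 1 <= K -> 2 <= m -> 0 <= y ->
  y = al * (K * m) + s * K * ((c + 1) * m - 1) -> (s = 1 \/ s = -1) ->
  al != - c -> al != c + 1 -> K * m <= y.
Proof.
move=> K1 m2 y0 Ey hs h1 h2.
case: hs => hs; subst s.
- have Ey' : y = K * ((al + c + 1) * m - 1) by rewrite Ey; ring.
  have hn : al + c + 1 != 1 by apply: contra h1 => /eqP h; apply/eqP; lia.
  move: hn Ey' y0; move: (al + c + 1) => n hn Ey' y0.
  case: (ltrgtP n 1) => hn1; [nia|nia|by rewrite hn1 eqxx in hn].
- have Ey' : y = K * ((al - c - 1) * m + 1) by rewrite Ey; ring.
  have hn : al - c - 1 != 0 by apply: contra h2 => /eqP h; apply/eqP; lia.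
  move: hn Ey' y0; move: (al - c - 1) => n hn Ey' y0.
  case: (ltrgtP n 0) => hn1; [nia|nia|by rewrite hn1 eqxx in hn].
Qed.

Lemma fam_locmin (k p q : nat) (c : int) (J : nat) : (2 <= k)%N -> (0 < J)%N ->
  prime p -> prime q -> (p %| k)%N -> (q %| k)%N ->
  (p%:Z %| c + 1)%Z -> (q%:Z %| c)%Z -> locmin k (mkv (fam k c J)).
Proof.
move=> k2 J0 pp pq pk qk pc qc u e.
have k0 : (0 < k)%N by lia.
rewrite fam_val // in e *.
have Hr := fam_det k c J.
have [E1 E2] := decomp (sval u) Hr.
have hbe : det (fam k c J) (sval u) = k%:Z \/ det (fam k c J) (sval u) = - k%:Z.
  move: e; rewrite /farey_edge fdistE fam_val //; lia.
have np := not_dvd_alpha pp pk hbe E1 E2 (canon_prim u).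
have nq := not_dvd_alpha pq qk hbe E1 E2 (canon_prim u).
have [y0 _] := canon_y u.
have h1 : det (sval u) (famr k c J) != - c.
  by apply/negP => /eqP h; move: nq; rewrite h rpredN qc.
have h2 : det (sval u) (famr k c J) != c + 1.
  by apply/negP => /eqP h; move: np; rewrite h pc.
have hs : (det (fam k c J) (sval u) = 1 * k%:Z \/ det (fam k c J) (sval u) = -1 * k%:Z).
  by case: hbe => ->; [left; rewrite mul1r| right; rewrite mulN1r].
rewrite /=.
move: E2 hs h1 h2; rewrite /fam /famr /=.
move: (det (sval u) _) (det _ (sval u)) => al be E2 hs h1 h2.
have [s hs' Ebe] : exists2 s : int, (s = 1 \/ s = -1) & be = s * k%:Z.
  by case: hs => ->; [exists 1; [left|]| exists (-1); [right|]].
apply: (@fam_arith k%:Z (k%:Z * J%:Z) (sval u).2 al c s).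
- clear -k2; lia.
- have hk : 2 <= k%:Z by lia.
  have hJ : 1 <= J%:Z by lia.
  clear -hk hJ; nia.
- exact: y0.
- by rewrite E2 Ebe; ring.
- exact: hs'.
- exact: h1.
- exact: h2.
Qed.

Lemma infinite_part (k : nat) : (2 <= k)%N ->
  ~ (exists p l : nat, [/\ prime p, (0 < l)%N & k = (p ^ l)%N]) ->
  infinite_set (farey_components k).
Proof.
move=> k2 npp.
have k0 : (0 < k)%N by lia.
have pp := pdiv_prime k2. set p := pdiv k in pp.
have pk : (p %| k)%N := pdiv_dvd k.
have [m' cop Ek] := pfactor_coprime pp k0.
have m1 : (1 < m')%N.
  case: m' cop Ek => [|[|m']] cop Ek //.
    by move: Ek k0 => ->.
  exfalso; apply: npp; exists p, (logn p k); split => //.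
    case: (logn p k) Ek => // Ek; rewrite mul1n expn0 in Ek; lia.
  by rewrite {1}Ek mul1n.
have pq := pdiv_prime m1. set q := pdiv m' in pq.
have qk : (q %| k)%N by rewrite Ek; apply: dvdn_mulr; exact: pdiv_dvd.
have cpq : coprime p q by apply: coprime_dvdr (pdiv_dvd m') cop.
have /eqP cpqz : coprimez p%:Z q%:Z by rewrite coprimezE.
have [u [v Huv]] := Bezoutz p%:Z q%:Z. rewrite cpqz in Huv.
pose c : int := - (v * q%:Z).
have pc : (p%:Z %| c + 1)%Z.
  have -> : c + 1 = u * p%:Z by rewrite /c -Huv; ring.
  apply: dvdz_mull; exact: dvdzz.
have qc : (q%:Z %| c)%Z by rewrite /c rpredN; apply: dvdz_mull; exact: dvdzz.
pose W := fun J : nat => mkv (fam k c J.+1).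
pose g := fun J : nat => [set w : vertex | farey_conn k (W J) w].
have ginj : injective g.
  move=> i j E.
  have C : farey_conn k (W i) (W j).
    have : g j (W j) by exact: rt_refl.
    by rewrite -E.
  have hcls : cls k (W i) by rewrite /cls /W fam_val //= dvdz_mulr // dvdzz.
  have := distinct_min k0 hcls (fam_locmin k2 (ltn0Sn i) pp pq pk qk pc qc)
    (fam_locmin k2 (ltn0Sn j) pp pq pk qk pc qc) C.
  move=> /(congr1 (fun x : vertex => (sval x).2)).
  rewrite /W !fam_val //= => h.
  have kz : k%:Z != 0 by clear -k0; lia.
  move/(mulfI kz)/(mulfI kz): h => h. clear -h; lia.
apply/infiniteP.
have h1 : (g @` [set: nat] #= [set: nat])%card by apply: inj_card_eq => x y _ _; exact: ginj.
move/card_eqPle: h1 => [_ h1].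
apply: card_le_trans h1 _.
apply: subset_card_le => C [J _ <-].
by exists (W J).
Qed.

Close Scope ring_scope.
Close Scope classical_set_scope.

Theorem theorem1p1 (k : nat) : (2 <= k)%N ->
  (forall p l : nat, prime p -> (0 < l)%N -> k = (p ^ l)%N ->
     (farey_components k #= `I_(p ^ l.-1 * p.+1))%card) /\
  (~ (exists p l : nat, [/\ prime p, (0 < l)%N & k = (p ^ l)%N]) ->
     infinite_set (farey_components k)).
Proof.
move=> k2; split.
  by move=> p l pp l0 ->; exact: prime_power_part.
exact: infinite_part.
Qed.
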